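(* Let $R$ be a ring and $M$ an $R$-bimodule. The map $\mathrm{tlog}:\widehat S(R;M)\to\prod_{n\ge1}(M^{\circledcirc_R n})^{C_n}$ descends to a continuous group homomorphism $\mathrm{tlog}:W(R;M)\to\prod_{n\ge1}(M^{\circledcirc_R n})^{C_n}$ (the ghost map). If all norm maps $(M^{\circledcirc_R n})_{C_n}\to(M^{\circledcirc_R n})^{C_n}$, $x\mapsto\sum_{g\in C_n}gx$, are injective (e.g. if all $(M^{\circledcirc_R n})_{C_n}$ are torsion free), then the ghost map on $W(R;M)$ is injective and in fact a homeomorphism onto its image (with the product topology on the target).
   Context: All rings are unital and associative but not necessarily commutative. For a ring $R$ and $R$-bimodule $M$, $M^{\otimes_R n}$ is the $n$-fold tensor power over $R$ ($M^{\otimes_R0}=R$), $M^{\circledcirc_R n}:=M^{\otimes_R n}/[R,M^{\otimes_R n}]$ ($[R,X]$ the additive subgroup generated by $rx-xr$), with $C_n$ acting by cyclic rotation of tensor factors. $\widehat T(R;M)=\prod_{n\ge0}M^{\otimes_R n}$ (elements $\sum a_nt^n$), product topology; $\widehat S(R;M)$ its group of elements with constant term $1$, topologized by the subgroups of elements $1+a_nt^n+\cdots$. $W(R;M)$ is the quotient of $\widehat S(R;M)$ by the closure of the normal subgroup generated by all commutators and all $(1-rmt)(1-mrt)^{-1}$, $r\in R$, $m\in M$. For a $C_N$-module $X$ and $H\le C_N$, $\mathrm{tr}_H^{C_N}(x)=\sum_{g\in C_N/H}gx$; for $a\in M^{\otimes_Rn}$, $a^k\in M^{\otimes_R kn}$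 is its $k$-fold tensor power. $\mathrm{tlog}:\widehat S(R;M)\to\prod_{n\ge1}(M^{\circledcirc_R n})^{C_n}$ is the unique continuous group homomorphism, natural in $(R;M)$, with $\mathrm{tlog}(1-at^n)=\sum_{k\ge1}\mathrm{tr}^{C_{kn}}_{C_k}(a^k)t^{kn}$ for $a\in M^{\otimes_Rn}$ (rationally it equals $-\mathrm{tr}\circ\log$, $\log(1+f)=\sum_{j\ge1}(-1)^{j+1}f^j/j$ followed by projection to cyclic coinvariants and the norm). *)

(* Defs.v *)
From HB Require Import structures.
From mathcomp Require Import all_boot all_order all_algebra.
Set Implicit Arguments.
Unset Strict Implicit.
Unset Printing Implicit Defensive.
Import GRing.Theory.
Local Open Scope ring_scope.

Definition bimodule_axioms (R : pzRingType) (M : zmodType)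
    (lact : R -> M -> M) (ract : M -> R -> M) : Prop :=
  (forall r m1 m2, lact r (m1 + m2) = lact r m1 + lact r m2) /\
  (forall r1 r2 m, lact (r1 + r2) m = lact r1 m + lact r2 m) /\
  (forall r1 r2 m, lact (r1 * r2) m = lact r1 (lact r2 m)) /\
  (forall m, lact 1 m = m) /\
  (forall r m1 m2, ract (m1 + m2) r = ract m1 r + ract m2 r) /\
  (forall r1 r2 m, ract m (r1 + r2) = ract m r1 + ract m r2) /\
  (forall r1 r2 m, ract m (r1 * r2) = ract (ract m r1) r2) /\
  (forall m, ract m 1 = m) /\
  (forall r s m, ract (lact r m) s = lact r (ract m s)).

(* The tensor algebra T_R(M) = (+)_n M^{(x)_R n}, characterised by its       *)
(* universal property: (T, j0, j1) is the initial ring under R receiving a   *)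
(* bimodule map from M.  The graded pieces M^{(x)_R n} are recovered below   *)
(* as the additive subgroups [Deg n] of T.                                   *)
Definition tensor_algebra (R : pzRingType) (M : zmodType)
    (lact : R -> M -> M) (ract : M -> R -> M)
    (T : pzRingType) (j0 : R -> T) (j1 : M -> T) : Prop :=
  [/\ (j0 1 = 1 /\ forall r s, j0 (r + s) = j0 r + j0 s /\ j0 (r * s) = j0 r * j0 s),
      (forall m1 m2, j1 (m1 + m2) = j1 m1 + j1 m2),
      (forall r m, j1 (lact r m) = j0 r * j1 m),
      (forall r m, j1 (ract m r) = j1 m * j0 r) &
      (forall (B : pzRingType) (phi : R -> B) (psi : M -> B),
         phi 1 = 1 ->
         (forall r s, phi (r + s) = phi r + phi s /\ phi (r * s) = phi r * phi s) ->
         (forall m1 m2, psi (m1 + m2) = psi m1 + psi m2) ->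
         (forall r m, psi (lact r m) = phi r * psi m) ->
         (forall r m, psi (ract m r) = psi m * phi r) ->
         (exists h : T -> B,
            [/\ h 1 = 1,
                (forall x y, h (x + y) = h x + h y /\ h (x * y) = h x * h y),
                (forall r, h (j0 r) = phi r) &
                (forall m, h (j1 m) = psi m)]) /\
         (forall h1 h2 : T -> B,
            (forall x y, h1 (x + y) = h1 x + h1 y /\ h1 (x * y) = h1 x * h1 y) ->
            (forall x y, h2 (x + y) = h2 x + h2 y /\ h2 (x * y) = h2 x * h2 y) ->
            h1 1 = 1 -> h2 1 = 1 ->
            (forall r, h1 (j0 r) = h2 (j0 r)) -> (forall m, h1 (j1 m) = h2 (j1 m)) ->
            forall x, h1 x = h2 x))].

Inductive span (V : zmodType) (G : V -> Prop) : V -> Prop :=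
  | span0 : span G 0
  | spanG x : G x -> span G x
  | spanB x y : span G x -> span G y -> span G (x - y).

Section Tensor.
Variables (R : pzRingType) (M : zmodType) (T : pzRingType) (j0 : R -> T) (j1 : M -> T).

(* M^{(x)_R n} inside T: spanned by  r m_1 (x) ... (x) m_n  (for n = 0: R). *)
Definition Deg (n : nat) : T -> Prop :=
  span (fun y => exists (r : R) (ms : 'I_n -> M), y = j0 r * \prod_(i < n) j1 (ms i)).

(* [R, M^{(x)_R n}]; x and y represent the same element of the cyclic
   coinvariants M^{(o)_R n} iff  Comm n (x - y). *)
Definition Comm (n : nat) : T -> Prop :=
  span (fun y => exists (r : R) (x : T), Deg n x /\ y = j0 r * x - x * j0 r).

(* Rot n x y : y represents the image of x under the generator of C_n acting
   on M^{(o)_R n} by cyclic rotation of the tensor factors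
   (m (x) w  |->  w (x) m,  m in M, w in M^{(x)(n-1)}). *)
Definition Rot (n : nat) (x y : T) : Prop :=
  exists s : seq (M * T),
    [/\ (forall p, p \in s -> Deg n.-1 p.2),
        x = \sum_(p <- s) j1 p.1 * p.2 &
        Comm n (y - \sum_(p <- s) p.2 * j1 p.1)].

(* RotIter n i x y : y represents g^i x, g the generator of C_n. *)
Fixpoint RotIter (n i : nat) (x y : T) : Prop :=
  match i with
  | 0 => Comm n (y - x)
  | i'.+1 => exists z, Rot n x z /\ RotIter n i' z y
  end.

(* TrRel n k a y : y represents tr_{C_k}^{C_{kn}}(a^k) in M^{(o)_R kn}; the
   cosets C_{kn}/C_k are represented by g^i, i < n. *)
Definition TrRel (n k : nat) (a y : T) : Prop :=
  exists ys : nat -> T,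
    (forall i, (i < n)%N -> RotIter (k * n) i (a ^+ k) (ys i)) /\
    Comm (k * n) (y - \sum_(i < n) ys i).

(* Kernel of the coinvariants M^{(o)n} -> (M^{(o)n})_{C_n}:
   Comm n together with all  x - g x. *)
Definition CycSub (n : nat) : T -> Prop :=
  span (fun y => Comm n y \/ exists x z, Deg n x /\ Rot n x z /\ y = x - z).

(* The norm map (M^{(o)n})_{C_n} -> (M^{(o)n})^{C_n} is injective. *)
Definition norm_injective (n : nat) : Prop :=
  forall x (ys : nat -> T), Deg n x ->
    (forall i, (i < n)%N -> RotIter n i x (ys i)) ->
    Comm n (\sum_(i < n) ys i) -> CycSub n x.

(* elements are sequences f with f n in Deg n (f n = coefficient of t^n). *)
Definition mulS (f g : nat -> T) : nat -> T :=
  fun n => \sum_(i < n.+1) f i * g (n - i)%N.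

Definition oneS : nat -> T := fun n => if n == 0%N then 1 else 0.

Definition InS (f : nat -> T) : Prop := f 0%N = 1 /\ forall n, Deg n (f n).

Definition one_minus (n : nat) (a : T) : nat -> T :=
  fun m => if m == 0%N then 1 else if m == n then - a else 0.

(* Generators: commutators, and (1 - rm t)(1 - mr t)^{-1}. *)
Definition Wgen (lact : R -> M -> M) (ract : M -> R -> M) (f : nat -> T) : Prop :=
  (exists x x' y y', InS x' /\ InS y' /\ [/\ InS x, InS y,
      (forall n, mulS x x' n = oneS n), (forall n, mulS y y' n = oneS n) &
      (forall n, f n = mulS (mulS (mulS x y) x') y' n)]) \/
  (exists r m u, [/\ InS u,
      (forall n, mulS u (one_minus 1 (j1 (ract m r))) n = oneS n) &
      (forall n, f n = mulS (one_minus 1 (j1 (lact r m))) u n)]).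

Inductive NormGen (lact : R -> M -> M) (ract : M -> R -> M) : (nat -> T) -> Prop :=
  | ng_gen f : InS f -> Wgen lact ract f -> NormGen lact ract f
  | ng_one : NormGen lact ract oneS
  | ng_ext f g : NormGen lact ract f -> (forall n, f n = g n) -> NormGen lact ract g
  | ng_mul f g : NormGen lact ract f -> NormGen lact ract g ->
                 NormGen lact ract (mulS f g)
  | ng_inv f g : NormGen lact ract f -> InS g -> (forall n, mulS f g n = oneS n) ->
                 NormGen lact ract g
  | ng_conj f g h : NormGen lact ract f -> InS g -> InS h ->
                 (forall n, mulS g h n = oneS n) ->
                 NormGen lact ract (mulS (mulS g f) h).

(* Its closure in \hat S(R;M); the subgroups U_n = 1 + t^n(...) form a basis
   of neighbourhoods of 1.  W(R;M) = \hat S(R;M) / WClos. *)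
Definition WClos (lact : R -> M -> M) (ract : M -> R -> M) (f : nat -> T) : Prop :=
  InS f /\ forall n, exists g, NormGen lact ract g /\
                           forall k, (k < n)%N -> f k = g k.

(* tlog : \hat S(R;M) -> prod_{n>=1} (M^{(o)n})^{C_n}, a value being represented
   by a sequence c with c n in Deg n, taken modulo Comm n.  Characterising
   properties: continuous group homomorphism with the prescribed values on
   1 - a t^n (this determines it uniquely). *)
Definition is_tlog (tlog : (nat -> T) -> nat -> T) : Prop :=
  [/\ (forall f n, InS f -> Deg n (tlog f n)),
      (forall f g n, InS f -> InS g -> (0 < n)%N ->
          Comm n (tlog (mulS f g) n - (tlog f n + tlog g n))),
      (forall m, exists n, forall f, InS f ->
          (forall k, (0 < k < n)%N -> f k = 0) ->
          forall k, (0 < k < m)%N -> Comm k (tlog f k)) &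
      (forall n a m, (0 < n)%N -> Deg n a -> (0 < m)%N ->
          if (n %| m)%N then TrRel n (m %/ n) a (tlog (one_minus n a) m)
          else Comm m (tlog (one_minus n a) m))].

End Tensor.

(* Main.v *)
Require Import Defs.
From mathcomp Require Import all_boot all_order all_algebra zify.
From Stdlib Require Import FunctionalExtensionality.
Import GRing.Theory.
Local Open Scope ring_scope.
Set Implicit Arguments.
Unset Strict Implicit.


Section Span.
Variable V : zmodType.
Variable G : V -> Prop.
Lemma span_opp x : Defs.span G x -> Defs.span G (- x).
Proof. by move=> h; rewrite -sub0r; apply: spanB => //; apply: span0. Qed.
Lemma span_add x y : Defs.span G x -> Defs.span G y -> Defs.span G (x + y).
Proof. by move=> hx hy; rewrite -[y]opprK; apply: spanB => //; apply: span_opp. Qed.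
Lemma span_eq x y : x = y -> Defs.span G x -> Defs.span G y.
Proof. by move=> ->. Qed.
Lemma span_sum (I : Type) (s : seq I) (F : I -> V) :
  (forall i, Defs.span G (F i)) -> Defs.span G (\sum_(i <- s) F i).
Proof.
elim: s => [|a s IH] H; first by rewrite big_nil; apply: span0.
by rewrite big_cons; apply: span_add; [apply: H | apply: IH].
Qed.
Lemma span_ind (P : V -> Prop) : P 0 -> (forall x, G x -> P x) ->
  (forall x y, P x -> P y -> P (x - y)) -> forall x, Defs.span G x -> P x.
Proof. by move=> h0 hG hB x; elim => //; auto. Qed.
Lemma span_mono (H : V -> Prop) : (forall x, G x -> Defs.span H x) -> forall x, Defs.span G x -> Defs.span H x.
Proof. by move=> h x; elim=> //; [apply: span0 | move=> *; apply: spanB]. Qed.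
End Span.

Lemma span_map (V W : zmodType) (G : V -> Prop) (H : W -> Prop) (phi : V -> W) :
  (forall x y, phi (x - y) = phi x - phi y) ->
  (forall x, G x -> Defs.span H (phi x)) -> forall x, Defs.span G x -> Defs.span H (phi x).
Proof.
move=> hB hG; have h0 : phi 0 = 0 by rewrite -(subrr 0) hB subrr.
move=> x; elim => [|x0 /hG //|x0 y _ hx _ hy]; first by rewrite h0; apply: span0.
by rewrite hB; apply: spanB.
Qed.


Section Series.
Variable T : pzRingType.
Implicit Types f g h : nat -> T.

Lemma mulSA f g h : mulS (mulS f g) h = mulS f (mulS g h).
Proof.
apply: functional_extensionality => n; rewrite /mulS.
have L : \sum_(i < n.+1) (\sum_(j < i.+1) f j * g (i - j)%N) * h (n - i)%N =
   \sum_(j < n.+1) \sum_(i < n.+1) (if (j <= i)%N then f j * g (i - j)%N * h (n - i)%N else 0).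
  rewrite (eq_bigr (fun i : 'I_n.+1 => \sum_(j < n.+1) (if (j <= i)%N then f j * g (i - j)%N * h (n - i)%N else 0))).
    by rewrite exchange_big.
  move=> i _; rewrite mulr_suml (big_ord_widen n.+1 (fun j => f j * g (i - j)%N * h (n - i)%N)) ; last exact: (ltn_ord i).
  by rewrite big_mkcond; apply: eq_bigr => j _; rewrite ltnS.
rewrite L; apply: eq_bigr => j _; rewrite mulr_sumr.
have hj : (j <= n)%N by rewrite -ltnS ltn_ord.
rewrite -(big_mkcond (fun i : 'I_n.+1 => (j <= i)%N)) /=.
rewrite -(big_mkord (fun i => (j <= i)%N) (fun i => f j * g (i - j)%N * h (n - i)%N)).
rewrite (_ : \sum_(0 <= i < n.+1 | (j <= i)%N) f j * g (i - j)%N * h (n - i)%N =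
   \sum_(j <= i < n.+1) f j * g (i - j)%N * h (n - i)%N); last first.
  by rewrite (big_nat_widenl _ _ _ _ _ (leq0n j)).
rewrite (big_addn 0 n.+1 j) big_mkord subSn //.
apply: eq_bigr => k _; rewrite addnK mulrA; congr (_ * _ * h _).
by rewrite addnC subnDA.
Qed.
End Series.

Section Series2.
Variable T : pzRingType.
Implicit Types f g h : nat -> T.

Definition eqN (N : nat) (f g : nat -> T) := forall k, (k < N)%N -> f k = g k.
Definition addS f g : nat -> T := fun k => f k + g k.
Definition oppS f : nat -> T := fun k => - f k.
Definition mono (i : nat) (x : T) : nat -> T := fun k => if k == i then x else 0.

Lemma sum_single (n i : nat) (F : nat -> T) :
  \sum_(l < n) (if (l == i :> nat) then F l else 0) = if (i < n)%N then F i else 0.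
Proof.
elim: n => [|n IH]; first by rewrite big_ord0.
rewrite big_ord_recr /= IH.
case: (ltngtP i n) => [h|h|->]; rewrite ?eqxx ?addr0 ?add0r //.
- by rewrite ltnS (ltnW h).
- by rewrite ltnS leqNgt h.
- by rewrite ltnSn.
Qed.

Lemma mulS_monol i x g k :
  mulS (mono i x) g k = if (i <= k)%N then x * g (k - i)%N else 0.
Proof.
rewrite /mulS /mono (eq_bigr (fun l : 'I_k.+1 => if (l == i :> nat) then x * g (k - l)%N else 0)).
  by rewrite (sum_single k.+1 i (fun l => x * g (k - l)%N)) ltnS.
by move=> l _; case: eqP => _; rewrite ?mul0r.
Qed.

Lemma mulS_monor j y g k :
  mulS g (mono j y) k = if (j <= k)%N then g (k - j)%N * y else 0.
Proof.
rewrite /mulS /mono (eq_bigr (fun l : 'I_k.+1 => if (l == (k - j)%N :> nat) then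
     (if (j <= k)%N then g l * y else 0) else 0)).
  rewrite (sum_single k.+1 (k - j)%N (fun l => if (j <= k)%N then g l * y else 0)).
  by rewrite ltnS leq_subr.
move=> l _; have hl : (l <= k)%N by rewrite -ltnS ltn_ord.
case: (leqP j k) => hjk.
- have -> : ((k - l)%N == j) = (l == (k - j)%N :> nat).
    by apply/eqP/eqP; lia.
  by case: eqP; rewrite ?mulr0.
- have -> : ((k - l)%N == j) = false by apply/negbTE; apply/eqP; lia.
  by rewrite mulr0; case: eqP.
Qed.

Lemma mul1S f : mulS (oneS T) f = f.
Proof.
apply: functional_extensionality => n; rewrite /mulS big_ord_recl /= /oneS /= mul1r subn0.
by rewrite big1 ?addr0 // => i _; rewrite /bump /= mul0r.
Qed.

Lemma mulS1 f : mulS f (oneS T) = f.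
Proof.
apply: functional_extensionality => n; rewrite /mulS big_ord_recr /= /oneS /= subnn mulr1.
rewrite big1 ?add0r // => i _.
rewrite (_ : ((n - i)%N == 0%N) = false) ?mulr0 //.
by apply/negbTE; rewrite subn_eq0 -ltnNge ltn_ord.
Qed.

Lemma mulSDr f g h : mulS f (addS g h) = addS (mulS f g) (mulS f h).
Proof.
by apply: functional_extensionality => n; rewrite /mulS /addS -big_split; apply: eq_bigr => i _; rewrite mulrDr.
Qed.

Lemma mulSDl f g h : mulS (addS f g) h = addS (mulS f h) (mulS g h).
Proof.
by apply: functional_extensionality => n; rewrite /mulS /addS -big_split; apply: eq_bigr => i _; rewrite mulrDl.
Qed.

Lemma mulSNr f g : mulS f (oppS g) = oppS (mulS f g).
Proof.
by apply: functional_extensionality => n; rewrite /mulS /oppS -sumrN; apply: eq_bigr => i _; rewrite mulrN.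
Qed.

Lemma mulSNl f g : mulS (oppS f) g = oppS (mulS f g).
Proof.
by apply: functional_extensionality => n; rewrite /mulS /oppS -sumrN; apply: eq_bigr => i _; rewrite mulNr.
Qed.

Lemma mulS0n f g : mulS f g 0%N = f 0%N * g 0%N.
Proof. by rewrite /mulS big_ord1. Qed.

Lemma eqN_mulS N f f' g g' : eqN N f f' -> eqN N g g' -> eqN N (mulS f g) (mulS f' g').
Proof.
move=> hf hg k hk; rewrite /mulS; apply: eq_bigr => i _.
have hi : (i <= k)%N by rewrite -ltnS ltn_ord.
rewrite hf ?hg //; [apply: leq_ltn_trans hk; exact: leq_subr | exact: leq_ltn_trans hk].
Qed.

Lemma eqN_le N N' f g : (N' <= N)%N -> eqN N f g -> eqN N' f g.
Proof. by move=> h e k hk; apply: e; apply: leq_trans h. Qed.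

Lemma eqN_trans N f g h : eqN N f g -> eqN N g h -> eqN N f h.
Proof. by move=> a b k hk; rewrite a ?b. Qed.
Lemma eqN_sym N f g : eqN N f g -> eqN N g f.
Proof. by move=> a k hk; rewrite a. Qed.
Lemma eqN_refl N f : eqN N f f.
Proof. by []. Qed.

End Series2.

Section Inv.
Variable T : pzRingType.
Implicit Types f g h : nat -> T.

Fixpoint gl f (n : nat) : nat -> T :=
  match n with
  | 0 => fun _ => 1
  | n'.+1 => fun k => if (k <= n')%N then gl f n' k
                      else - \sum_(l < k) f l.+1 * gl f n' (k - l.+1)%N
  end.
Definition sinv f : nat -> T := fun k => gl f k k.

Lemma gl_stable f n k : (k <= n)%N -> gl f n k = sinv f k.
Proof.
elim: n k => [|n IH] k hk; first by move: hk; rewrite leqn0 => /eqP ->.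
rewrite /=; case: ifP => hkn; first exact: IH.
have -> : k = n.+1 by apply/eqP; rewrite eqn_leq hk ltnNge hkn.
by rewrite /sinv /= ltnn.
Qed.

Lemma sinv0 f : sinv f 0 = 1.
Proof. by []. Qed.

Lemma sinvS f k : sinv f k.+1 = - \sum_(l < k.+1) f l.+1 * sinv f (k - l)%N.
Proof.
rewrite {1}/sinv /= ltnn; congr (- _); apply: eq_bigr => l _.
by rewrite subSS gl_stable // leq_subr.
Qed.

Lemma mulS_sinv f : f 0%N = 1 -> mulS f (sinv f) = oneS T.
Proof.
move=> f0; apply: functional_extensionality => n; rewrite /mulS /oneS.
case: n => [|k]; first by rewrite big_ord1 f0 mul1r.
rewrite big_ord_recl /= f0 mul1r subn0 sinvS.
by rewrite (eq_bigr (fun l : 'I_k.+1 => f l.+1 * sinv f (k - l)%N)) ?addNr // => l _; rewrite /bump /= subSS.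
Qed.

Lemma sinv_mulS f : f 0%N = 1 -> mulS (sinv f) f = oneS T.
Proof.
move=> f0; have g0 : sinv f 0%N = 1 by [].
have e1 := mulS_sinv f0; have e2 := mulS_sinv g0.
have : f = sinv (sinv f).
  by rewrite -{1}[f]mulS1 -e2 -mulSA e1 mul1S.
by move=> {2}->.
Qed.

Lemma sinv_uniq f g : f 0%N = 1 -> mulS f g = oneS T -> g = sinv f.
Proof.
move=> f0 e; by rewrite -[g]mul1S -(sinv_mulS f0) mulSA e mulS1.
Qed.

Lemma sinv_uniql f g : f 0%N = 1 -> mulS g f = oneS T -> g = sinv f.
Proof.
move=> f0 e; by rewrite -[g]mulS1 -(mulS_sinv f0) -mulSA e mul1S.
Qed.

Lemma eqN_sinv N f f' : f 0%N = 1 -> f' 0%N = 1 -> eqN N f f' -> eqN N (sinv f) (sinv f').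
Proof.
move=> f0 f'0 e.
rewrite -[sinv f]mulS1 -(mulS_sinv f'0) -mulSA.
rewrite -{2}[sinv f']mul1S -(sinv_mulS f0).
apply: eqN_mulS => //; apply: eqN_mulS => //; exact: eqN_sym.
Qed.

End Inv.


Ltac crush :=
  repeat (match goal with |- context [if ?b then _ else _] =>
            let H := fresh "H" in case H : b; try (exfalso; lia) end).

Section SerComp.
Variable T : pzRingType.
Implicit Types f g h : nat -> T.
Implicit Types a b c x y : T.
Local Notation one := (oneS T).

Lemma omE n a k : one_minus n a k = if k == 0%N then 1 else if k == n then - a else 0.
Proof. by []. Qed.

Lemma mulS_omL i x g k : (0 < i)%N ->
  mulS (one_minus i x) g k = g k - (if (i <= k)%N then x * g (k - i)%N else 0).
Proof.
move=> hi; rewrite /mulS big_ord_recl /= omE /= mul1r subn0; congr (_ + _).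
rewrite (eq_bigr (fun l : 'I_k => if (l == i.-1 :> nat) then - (x * g (k - i)%N) else 0)).
  rewrite (sum_single k i.-1 (fun l => - (x * g (k - i)%N))).
  by crush; rewrite ?oppr0.
move=> l _; rewrite omE /bump /= add1n; crush; rewrite ?mul0r //.
by rewrite mulNr; congr (- (x * g _)); lia.
Qed.

Lemma mulS_omR j y g k : (0 < j)%N ->
  mulS g (one_minus j y) k = g k - (if (j <= k)%N then g (k - j)%N * y else 0).
Proof.
move=> hj; rewrite /mulS big_ord_recr /= omE subnn eqxx mulr1 addrC; congr (_ + _).
rewrite (eq_bigr (fun l : 'I_k => if (l == (k - j)%N :> nat) then
     (if (j <= k)%N then - (g (k - j)%N * y) else 0) else 0)).
  rewrite (sum_single k (k - j)%N (fun l => if (j <= k)%N then - (g (k - j)%N * y) else 0)).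
  by crush; rewrite ?oppr0.
move=> l _; rewrite omE /=; have hl := ltn_ord l.
crush; rewrite ?mulr0 //.
have -> : l = (k - j)%N :> nat by lia.
by rewrite mulrN.
Qed.

Lemma om_mul n a c : (0 < n)%N ->
  eqN n.+1 (mulS (one_minus n a) (one_minus n c)) (one_minus n (a + c)).
Proof.
move=> hn k hk; rewrite mulS_omL // !omE; crush; rewrite ?mulr0 ?subr0 //.
by rewrite mulr1 opprD addrC.
Qed.

Lemma om0 n : one_minus n 0 = one.
Proof. by apply: functional_extensionality => k; rewrite omE /oneS oppr0; crush. Qed.

Lemma sinv_eqN N f g : f 0%N = 1 -> eqN N (mulS f g) one -> eqN N (sinv f) g.
Proof.
move=> x0 e; rewrite -[g]mul1S -(sinv_mulS x0) mulSA -{1}[sinv f]mulS1.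
by apply: eqN_mulS => //; apply: eqN_sym.
Qed.

Lemma sinv_om n b : (0 < n)%N -> eqN n.+1 (sinv (one_minus n b)) (one_minus n (- b)).
Proof.
move=> hn; apply: sinv_eqN => //; have := om_mul b (- b) hn.
by rewrite subrr om0.
Qed.

Lemma om_step j h : (0 < j)%N -> eqN j h one -> eqN j.+1 (one_minus j (- h j)) h.
Proof.
move=> hj e k hk; rewrite omE; case: eqP => [->|k0].
  by rewrite e.
case: eqP => [->|kj]; first by rewrite opprK.
by rewrite e /oneS; [case: eqP | lia].
Qed.

Lemma swap_comp i j x y : (0 < i)%N -> (0 < j)%N ->
  eqN (i + j).+1 (mulS (one_minus i x) (one_minus j y))
     (mulS (mulS (one_minus j y) (one_minus i x)) (one_minus (i + j) (y * x - x * y))).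
Proof.
move=> hi hj k hk.
rewrite mulS_omL // mulS_omR ?addn_gt0 ?hi //.
rewrite !mulS_omL // !omE.
crush; rewrite ?mulr0 ?mul0r ?subr0 ?sub0r ?mulr1 ?mul1r ?addr0 ?add0r ?mulrN ?mulNr ?opprK //.
- by rewrite addrC.
- by rewrite opprB addrC subrK.
Qed.

End SerComp.


Section DegS.
Variables (R : pzRingType) (M : zmodType) (T : pzRingType) (j0 : R -> T) (j1 : M -> T).
Variables (lact : R -> M -> M) (ract : M -> R -> M).
Variable j0_1 : j0 1 = 1.
Variable j0_add : forall r s, j0 (r + s) = j0 r + j0 s.
Variable j0_mul : forall r s, j0 (r * s) = j0 r * j0 s.
Variable j1_add : forall m1 m2, j1 (m1 + m2) = j1 m1 + j1 m2.
Variable j1_l : forall r m, j1 (lact r m) = j0 r * j1 m.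
Variable j1_r : forall r m, j1 (ract m r) = j1 m * j0 r.

Local Notation D := (Deg j0 j1).

Lemma D0 n : D n 0. Proof. exact: span0. Qed.
Lemma DB n x y : D n x -> D n y -> D n (x - y). Proof. exact: spanB. Qed.
Lemma DD n x y : D n x -> D n y -> D n (x + y). Proof. exact: span_add. Qed.
Lemma DN n x : D n x -> D n (- x). Proof. exact: span_opp. Qed.
Lemma Dsum n (I : Type) (s : seq I) (F : I -> T) : (forall i, Deg j0 j1 n (F i)) -> Deg j0 j1 n (\sum_(i <- s) F i).
Proof. exact: span_sum. Qed.
Lemma Dgen n r (ms : 'I_n -> M) : D n (j0 r * \prod_(i < n) j1 (ms i)).
Proof. by apply: spanG; exists r, ms. Qed.

Lemma j0_0 : j0 0 = 0.
Proof. by apply: (addrI (j0 0)); rewrite -j0_add !addr0. Qed.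

Lemma D_j0l n r y : D n y -> D n (j0 r * y).
Proof.
apply: (span_map (phi := fun y => j0 r * y)); first by move=> *; rewrite mulrBr.
by move=> _ [r' [ms ->]]; rewrite mulrA -j0_mul; apply: Dgen.
Qed.

Lemma D_j0r n r y : D n y -> D n (y * j0 r).
Proof.
apply: (span_map (phi := fun y => y * j0 r)); first by move=> *; rewrite mulrBl.
move=> _ [r' [ms ->]]; case: n ms => [|n] ms.
  by rewrite big_ord0 mulr1 -j0_mul -[j0 _]mulr1; have := Dgen (r' * r) ms; rewrite big_ord0.
pose ms' := fun i : 'I_n.+1 => if (val i == n) then ract (ms i) r else ms i.
have -> : j0 r' * \prod_(i < n.+1) j1 (ms i) * j0 r = j0 r' * \prod_(i < n.+1) j1 (ms' i).
  rewrite !big_ord_recr /= -!mulrA; congr (_ * _); rewrite /ms' /= eqxx j1_r; congr (_ * _).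
  by apply: eq_bigr => i _; rewrite /ms' /= (ltn_eqF (ltn_ord i)).
exact: Dgen.
Qed.

Lemma D_j1l n m y : D n y -> D n.+1 (j1 m * y).
Proof.
apply: (span_map (phi := fun y => j1 m * y)); first by move=> *; rewrite mulrBr.
move=> _ [r [ms ->]].
pose ms' := fun i : 'I_n.+1 => if unlift ord0 i is Some j then ms j else ract m r.
have -> : j1 m * (j0 r * \prod_(i < n) j1 (ms i)) = j0 1 * \prod_(i < n.+1) j1 (ms' i).
  rewrite j0_1 mul1r big_ord_recl /ms' unlift_none j1_r -mulrA; congr (_ * (_ * _)).
  by apply: eq_bigr => i _; rewrite liftK.
exact: Dgen.
Qed.

Lemma D_prod_mul b y : D b y -> forall a (ms : 'I_a -> M), D (a + b) (\prod_(i < a) j1 (ms i) * y).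
Proof.
move=> hy; elim => [|a IH] ms; first by rewrite big_ord0 mul1r.
by rewrite big_ord_recl -mulrA addSn; apply: D_j1l; apply: IH.
Qed.

Lemma D_mul a b x y : D a x -> D b y -> D (a + b) (x * y).
Proof.
move=> hx hy; move: x hx; apply: (span_map (phi := fun x => x * y)); first by move=> *; rewrite mulrBl.
by move=> _ [r [ms ->]]; rewrite -mulrA; apply: D_j0l; apply: D_prod_mul.
Qed.

Lemma D1 : D 0 1.
Proof. by have := Dgen 1 (fun i : 'I_0 => 0); rewrite big_ord0 j0_1 mulr1. Qed.
Lemma D_j0 r : D 0 (j0 r).
Proof. by have := D_j0l r D1; rewrite mulr1. Qed.
Lemma D_j1 m : D 1 (j1 m).
Proof. by have := D_j1l m D1; rewrite mulr1. Qed.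
Lemma D_exp k x : D 1 x -> D k (x ^+ k).
Proof.
move=> hx; elim: k => [|k IH]; first by rewrite expr0; apply: D1.
by rewrite exprS; apply: (D_mul hx IH).
Qed.

End DegS.


Section Main.
Variables (R : pzRingType) (M : zmodType) (T : pzRingType) (j0 : R -> T) (j1 : M -> T).
Variables (lact : R -> M -> M) (ract : M -> R -> M).
Variable j0_1 : j0 1 = 1.
Variable j0_add : forall r s, j0 (r + s) = j0 r + j0 s.
Variable j0_mul : forall r s, j0 (r * s) = j0 r * j0 s.
Variable j1_add : forall m1 m2, j1 (m1 + m2) = j1 m1 + j1 m2.
Variable j1_l : forall r m, j1 (lact r m) = j0 r * j1 m.
Variable j1_r : forall r m, j1 (ract m r) = j1 m * j0 r.
Variable tlog : (nat -> T) -> nat -> T.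
Variable Htl : is_tlog j0 j1 tlog.

Local Notation D := (Deg j0 j1).
Local Notation C := (Comm j0 j1).
Local Notation S := (InS j0 j1).
Local Notation NG := (NormGen j0 j1 lact ract).
Local Notation one := (oneS T).

Lemma Dmul a b x y : D a x -> D b y -> D (a + b) (x * y).
Proof. by move=> hx hy; apply: (@D_mul _ _ _ j0 j1 ract). Qed.
Lemma Dj0l n r y : D n y -> D n (j0 r * y).
Proof. by move=> hy; apply: D_j0l. Qed.
Lemma Dj0r n r y : D n y -> D n (y * j0 r).
Proof. by move=> hy; apply: (@D_j0r _ _ _ j0 j1 ract). Qed.
Lemma Dj1 m : D 1 (j1 m).
Proof. by apply: (@D_j1 _ _ _ j0 j1 ract). Qed.
Lemma Dj0 r : D 0 (j0 r).
Proof. by apply: D_j0. Qed.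
Lemma Dexp k x : D 1 x -> D k (x ^+ k).
Proof. by move=> hx; apply: (@D_exp _ _ _ j0 j1 ract). Qed.
Lemma Done : D 0 1.
Proof. exact: (D1 j1 j0_1). Qed.

Lemma InS_one : S one.
Proof.
split => // n; rewrite /oneS; case: n => [|n] /=; last exact: D0.
exact: Done.
Qed.

Lemma InS_mul f g : S f -> S g -> S (mulS f g).
Proof.
move=> [f0 fD] [g0 gD]; split; first by rewrite mulS0n f0 g0 mulr1.
move=> n; rewrite /mulS; apply: Dsum => i.
have hi : (i <= n)%N by rewrite -ltnS ltn_ord.
by rewrite -{1}(subnKC hi); apply: Dmul.
Qed.

Lemma InS_sinv f : S f -> S (sinv f).
Proof.
move=> [f0 fD]; split => //.
suff H : forall n k, (k <= n)%N -> D k (sinv f k) by move=> n; apply: (H n).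
elim => [|n IH] k hk; first by move: hk; rewrite leqn0 => /eqP ->; exact: Done.
case: k hk => [|k] hk; first exact: Done.
rewrite sinvS; apply: DN; apply: Dsum => l.
have hl : (l <= k)%N by rewrite -ltnS ltn_ord.
have e : (l.+1 + (k - l))%N = k.+1 by lia.
have := Dmul (fD l.+1) (IH (k - l)%N _); rewrite e; apply; lia.
Qed.

Lemma om_eq n a : (0 < n)%N -> one_minus n a = addS one (mono n (- a)).
Proof.
move=> hn; apply: functional_extensionality => k; rewrite /one_minus /addS /oneS /mono.
case: eqP => [->|_]; first by rewrite eq_sym (gtn_eqF hn) addr0.
by rewrite add0r.
Qed.

Lemma InS_om n a : (0 < n)%N -> D n a -> S (one_minus n a).
Proof.
move=> hn ha; split; first by rewrite /one_minus.
move=> k; rewrite /one_minus; case: eqP => [->|_]; first exact: Done.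
case: eqP => [->|_]; [exact: DN | exact: D0].
Qed.

Lemma C0 n : C n 0. Proof. exact: span0. Qed.
Lemma CB n x y : C n x -> C n y -> C n (x - y). Proof. exact: spanB. Qed.
Lemma CD n x y : C n x -> C n y -> C n (x + y). Proof. exact: span_add. Qed.
Lemma CN n x : C n x -> C n (- x). Proof. exact: span_opp. Qed.
Lemma CE n x y : x = y -> C n x -> C n y. Proof. by move=> ->. Qed.


Lemma tl_deg f n : S f -> D n (tlog f n).
Proof. by case: Htl => h _ _ _; apply: h. Qed.

Lemma tl_hom f g n : S f -> S g -> (0 < n)%N -> C n (tlog (mulS f g) n - (tlog f n + tlog g n)).
Proof. by case: Htl => _ h _ _; apply: h. Qed.

Lemma tl_one n : (0 < n)%N -> C n (tlog one n).
Proof.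
move=> hn; have := tl_hom InS_one InS_one hn; rewrite mul1S => /CN.
by apply: CE; rewrite opprB addrK.
Qed.

Lemma tl_mulE f g n : S f -> S g -> (0 < n)%N -> C n (tlog g n) ->
  C n (tlog (mulS f g) n - tlog f n).
Proof.
move=> hf hg hn hc; have := CD (tl_hom hf hg hn) hc.
by apply: CE; rewrite opprD addrA subrK.
Qed.

Lemma tl_mulE2 f g n : S f -> S g -> (0 < n)%N -> C n (tlog f n) ->
  C n (tlog (mulS f g) n - tlog g n).
Proof.
move=> hf hg hn hc; have := CD (tl_hom hf hg hn) hc.
by apply: CE; rewrite opprD addrA addrAC subrK.
Qed.

Lemma tl_mul0 f g n : S f -> S g -> (0 < n)%N -> C n (tlog f n) -> C n (tlog g n) ->
  C n (tlog (mulS f g) n).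
Proof.
move=> hf hg hn h1 h2; have := CD (tl_mulE hf hg hn h2) h1.
by apply: CE; rewrite subrK.
Qed.

Lemma tl_invE f g n : S f -> S g -> (0 < n)%N -> mulS f g = one ->
  C n (tlog f n + tlog g n).
Proof.
move=> hf hg hn e; have := CB (tl_one hn) (tl_hom hf hg hn).
by rewrite e; apply: CE; rewrite opprB addrC subrK.
Qed.

Lemma tl_inv0 f g n : S f -> S g -> (0 < n)%N -> mulS f g = one -> C n (tlog f n) ->
  C n (tlog g n).
Proof.
move=> hf hg hn e h; have := CB (tl_invE hf hg hn e) h.
by apply: CE; rewrite addrC addKr.
Qed.

Lemma tl_om1 a k : (0 < k)%N -> D 1 a -> C k (tlog (one_minus 1 a) k - a ^+ k).
Proof.
move=> hk ha; case: Htl => _ _ _ /(_ 1%N a k isT ha hk); rewrite dvd1n divn1.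
move=> [ys [hys hy]]; have := hys 0%N isT; rewrite /= muln1 => h0.
move: hy; rewrite muln1 big_ord1 => hy.
by have := CD hy h0; apply: CE; rewrite addrA subrK.
Qed.


Lemma cq_trans n x y z : C n (x - y) -> C n (y - z) -> C n (x - z).
Proof. by move=> h1 h2; have := CD h1 h2; apply: CE; rewrite addrA subrK. Qed.
Lemma cq_add n x x' y y' : C n (x - x') -> C n (y - y') -> C n ((x + y) - (x' + y')).
Proof. by move=> h1 h2; have := CD h1 h2; apply: CE; rewrite opprD addrACA. Qed.
Lemma cq_sub n x x' y y' : C n (x - x') -> C n (y - y') -> C n ((x - y) - (x' - y')).
Proof. by move=> h1 h2; have := CB h1 h2; apply: CE; rewrite !opprD !opprK addrACA. Qed.
Lemma cq_sym n x y : C n (x - y) -> C n (y - x).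
Proof. by move=> h; have := CN h; apply: CE; rewrite opprB. Qed.
Lemma cq_refl n x : C n (x - x).
Proof. by rewrite subrr; apply: C0. Qed.
Lemma cq0 n x : C n x -> C n (x - 0).
Proof. by rewrite subr0. Qed.
Lemma cq0' n x : C n (x - 0) -> C n x.
Proof. by rewrite subr0. Qed.
Lemma cq_eq n x y : x = y -> C n (x - y).
Proof. by move=> ->; apply: cq_refl. Qed.

Lemma NG_InS f : NG f -> S f.
Proof.
elim => {f}.
- by move=> f hf _.
- exact: InS_one.
- by move=> f g _ hf e; have -> : g = f by apply: functional_extensionality => n; rewrite e.
- by move=> f g _ hf _ hg; apply: InS_mul.
- by move=> f g _ _ hg.
- by move=> f g h _ hf hg hh _; apply: InS_mul => //; apply: InS_mul.
Qed.

Lemma exp_rot (p q : T) k : (p * q) ^+ k.+1 = p * ((q * p) ^+ k * q).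
Proof.
elim: k => [|k IH]; first by rewrite expr1 expr0 mul1r.
by rewrite exprSr IH exprSr !mulrA.
Qed.

Lemma C_rot n r m : (0 < n)%N -> C n ((j0 r * j1 m) ^+ n - (j1 m * j0 r) ^+ n).
Proof.
case: n => [//|k] _.
have -> : (j1 m * j0 r) ^+ k.+1 = ((j1 m * j0 r) ^+ k * j1 m) * j0 r.
  by rewrite exprSr !mulrA.
rewrite exp_rot; apply: spanG; exists r, ((j1 m * j0 r) ^+ k * j1 m); split => //.
rewrite -addn1; apply: Dmul; last exact: Dj1.
by apply: Dexp; rewrite -j1_r; apply: Dj1.
Qed.

Lemma fext (f g : nat -> T) : (forall n, f n = g n) -> f = g.
Proof. exact: functional_extensionality. Qed.

Lemma tl_NG f : NG f -> forall n, (0 < n)%N -> C n (tlog f n).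
Proof.
elim => {f}.
- move=> f hf [[x [x' [y [y' [hx' [hy' [hx hy exx eyy ef]]]]]]] | [r [m [u [hu eu ef]]]]] n hn.
  + have -> := fext ef.
    move: (fext exx) (fext eyy) => {}exx {}eyy.
    have hxy := InS_mul hx hy; have hxyx := InS_mul hxy hx'.
    apply: cq0'; apply: cq_trans (tl_hom hxyx hy' hn) _.
    apply: cq_trans (cq_add (cq_trans (tl_hom hxy hx' hn) (cq_add (tl_hom hx hy hn) (cq_refl _ _))) (cq_refl _ _)) _.
    have e : forall a b c d : T, a + b + c + d = (a + c) + (b + d).
      by move=> a b c d; rewrite (addrAC a b c) -(addrA (a + c) b d).
    rewrite (e (tlog x n)) -[0]addr0; apply: cq_add; apply: cq0; exact: tl_invE.
  + have -> := fext ef; move: (fext eu) => {}eu.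
    have ha : D 1 (j1 (lact r m)) by apply: Dj1.
    have hb : D 1 (j1 (ract m r)) by apply: Dj1.
    have hoa := @InS_om 1%N _ isT ha; have hob := @InS_om 1%N _ isT hb.
    apply: cq0'; apply: cq_trans (tl_hom hoa hu hn) _.
    have e : forall a b c : T, a + b = (a - c) + (c + b).
      by move=> a b c; rewrite addrA subrK.
    rewrite (e _ _ (tlog (one_minus 1 (j1 (ract m r))) n)) -[0]addr0; apply: cq_add.
    * apply: cq0; apply: cq0'; apply: cq_trans (cq_sub (tl_om1 hn ha) (tl_om1 hn hb)) _.
      by apply: cq0; rewrite j1_l j1_r; apply: C_rot.
    * by apply: cq0; rewrite addrC; apply: tl_invE.
- by move=> n hn; apply: tl_one.
- move=> f g _ IH e n hn; have <- : f = g by apply: fext.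
  exact: IH.
- move=> f g hf IH1 hg IH2 n hn; apply: tl_mul0 => //; [exact: NG_InS | exact: NG_InS | exact: IH1 | exact: IH2].
- move=> f g hf IH hg e n hn; apply: (tl_inv0 (f := f)) => //; [exact: NG_InS | exact: fext | exact: IH].
- move=> f g h hf IH hg hh e n hn.
  have hfS := NG_InS hf.
  apply: cq0'; apply: cq_trans (tl_hom (InS_mul hg hfS) hh hn) _.
  apply: cq_trans (cq_add (tl_hom hg hfS hn) (cq_refl _ _)) _.
  apply: cq_trans (cq_add (cq_add (cq_refl _ (tlog g n)) (cq0 (IH n hn))) (cq_refl _ _)) _.
  by rewrite addr0; apply: cq0; apply: tl_invE => //; apply: fext.
Qed.


Lemma subsub (a b c d : T) : (a - b) - (c - d) = (a - c) - (b - d).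
Proof. by rewrite !opprD !opprK addrACA. Qed.

Definition E n a := exists e, NG e /\ eqN n.+1 e (one_minus n a).

Lemma E0 n : E n 0.
Proof. by exists one; split; [apply: ng_one | rewrite om0]. Qed.

Lemma E_sub n a b : E n a -> E n b -> (0 < n)%N -> E n (a - b).
Proof.
move=> [e1 [h1 q1]] [e2 [h2 q2]] hn.
have S2 := NG_InS h2; have e20 : e2 0%N = 1 by case: S2.
exists (mulS e1 (sinv e2)); split.
  apply: ng_mul h1 _; apply: (ng_inv (f := e2)) h2 (InS_sinv S2) _.
  by move=> k; rewrite mulS_sinv.
apply: eqN_trans (eqN_mulS q1 (eqN_sinv e20 _ q2)) _ => //.
apply: eqN_trans (eqN_mulS (eqN_refl _) (sinv_om b hn)) _.
exact: om_mul.
Qed.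

Lemma E_opp n a : E n a -> (0 < n)%N -> E n (- a).
Proof. by move=> h hn; rewrite -sub0r; apply: E_sub => //; apply: E0. Qed.
Lemma E_add n a b : E n a -> E n b -> (0 < n)%N -> E n (a + b).
Proof. by move=> ha hb hn; rewrite -[b]opprK; apply: E_sub => //; apply: E_opp. Qed.
Lemma E_eq n a b : a = b -> E n a -> E n b.
Proof. by move=> ->. Qed.

Lemma E_swap i j x y : (0 < i)%N -> (0 < j)%N -> D i x -> D j y -> E (i + j) (y * x - x * y).
Proof.
move=> hi hj hx hy.
set a := one_minus i x; set b := one_minus j y.
have Sa : S a by apply: InS_om.
have Sb : S b by apply: InS_om.
have a0 : a 0%N = 1 by []. have b0 : b 0%N = 1 by [].
have Sa' := InS_sinv Sa; have Sb' := InS_sinv Sb.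
set c := mulS (mulS (mulS a b) (sinv a)) (sinv b).
have Sc : S c by do 3 apply: InS_mul => //.
have Nc : NG c.
  apply: ng_gen => //; left; exists a, (sinv a), b, (sinv b); do 2 split => //.
  by split => // k; rewrite mulS_sinv.
set Q := mulS b a.
have SQ : S Q by apply: InS_mul.
have Q0 : Q 0%N = 1 by case: SQ.
have Nd : NG (mulS (mulS (sinv Q) c) Q).
  by apply: ng_conj => //; [exact: InS_sinv | move=> k; rewrite sinv_mulS].
exists (mulS (mulS (sinv Q) c) Q); split => //.
have eab : mulS (sinv a) (sinv b) = sinv Q.
  apply: sinv_uniq => //; rewrite /Q mulSA -(mulSA a) mulS_sinv // mul1S mulS_sinv //.
have -> : mulS (mulS (sinv Q) c) Q = mulS (sinv Q) (mulS a b).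
  by rewrite /c mulSA (mulSA (mulS a b)) eab !mulSA sinv_mulS // mulS1.
have := swap_comp x y hi hj.
rewrite -/a -/b -/Q => hsw.
apply: eqN_trans (eqN_mulS (eqN_refl _) hsw) _.
by rewrite -mulSA sinv_mulS // mul1S.
Qed.

Lemma E_gen1 r m : E 1 (j1 (lact r m) - j1 (ract m r)).
Proof.
have ha : D 1 (j1 (lact r m)) by apply: Dj1.
have hb : D 1 (j1 (ract m r)) by apply: Dj1.
have hoa := @InS_om 1%N _ isT ha; have hob := @InS_om 1%N _ isT hb.
exists (mulS (one_minus 1 (j1 (lact r m))) (sinv (one_minus 1 (j1 (ract m r))))); split.
  apply: ng_gen; first by apply: InS_mul => //; apply: InS_sinv.
  right; exists r, m, (sinv (one_minus 1 (j1 (ract m r)))); split => //.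
    exact: InS_sinv.
  by move=> k; rewrite sinv_mulS.
apply: eqN_trans (eqN_mulS (eqN_refl _) (@sinv_om _ 1%N _ isT)) _.
exact: om_mul.
Qed.

Lemma E_G1 n r X : (0 < n)%N -> D n X -> E n (j0 r * X - X * j0 r).
Proof.
move=> hn; apply: (@span_ind _ _ (fun X => E n (j0 r * X - X * j0 r))).
- by rewrite mulr0 mul0r subrr; apply: E0.
- move=> _ [r' [ms ->]]; case: n hn ms => [//|[|k]] _ ms.
  + rewrite big_ord1; apply: (E_eq _ (E_gen1 r (lact r' (ms ord0)))).
    by rewrite j1_r !j1_l.
  + rewrite big_ord_recl; set w := \prod_(i < k.+1) _.
    have Dw : D k.+1 w by rewrite -[w]mul1r -j0_1; apply: Dgen.
    set m0 := ms ord0.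
    have D1x : D 1 (j0 r' * j1 m0) by apply: Dj0l; apply: Dj1.
    have h1 := E_swap (i := k.+1) (j := 1) (x := w) (y := j0 r * (j0 r' * j1 m0)) isT isT Dw (Dj0l r D1x).
    have h2 := E_swap (i := k.+1) (j := 1) (x := w * j0 r) (y := j0 r' * j1 m0) isT isT (Dj0r r Dw) D1x.
    rewrite addn1 in h1 h2.
    apply: (E_eq _ (E_sub h1 h2 isT)).
    by rewrite subsub !mulrA subrr subr0.
- move=> x y hx hy; apply: (E_eq _ (E_sub hx hy hn)).
  by rewrite mulrBr mulrBl subsub.
Qed.

Lemma E_comm n y : (0 < n)%N -> C n y -> E n y.
Proof.
move=> hn; apply: span_ind; first exact: E0.
  by move=> _ [r [x [hx ->]]]; apply: E_G1.
by move=> *; apply: E_sub.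
Qed.

Lemma E_G2 n m w : (0 < n)%N -> D n.-1 w -> E n (j1 m * w - w * j1 m).
Proof.
case: n => [//|[|k]] _ /=.
- apply: (@span_ind _ _ (fun w => E 1 (j1 m * w - w * j1 m))).
  + by rewrite mulr0 mul0r subrr; apply: E0.
  + move=> _ [r' [ms ->]]; rewrite big_ord0 mulr1 -j1_l -j1_r.
    by apply: (E_eq _ (E_opp (E_gen1 r' m) isT)); rewrite opprB.
  + move=> x y hx hy; apply: (E_eq _ (E_sub hx hy isT)).
    by rewrite mulrBr mulrBl subsub.
- move=> hw; have := E_opp (E_swap (i := 1) (j := k.+1) (x := j1 m) (y := w) isT isT (Dj1 m) hw) isT.
  by rewrite add1n opprB.
Qed.

Lemma E_cyc n a : (0 < n)%N -> CycSub j0 j1 n a -> E n a.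
Proof.
move=> hn; apply: span_ind; first exact: E0; last by move=> *; apply: E_sub.
move=> y [/(E_comm hn) //|[x [z [hx [[s [hs ex hz]] ->]]]]].
have -> : x - z = \sum_(p <- s) (j1 p.1 * p.2 - p.2 * j1 p.1) -
     (z - \sum_(p <- s) p.2 * j1 p.1).
  by rewrite sumrB ex opprB addrA subrK.
apply: E_sub => //; last exact: E_comm.
elim: s hs {ex hz} => [|p s IH] hs; first by rewrite big_nil; apply: E0.
rewrite big_cons; apply: E_add => //.
  by apply: E_G2 => //; apply: hs; rewrite inE eqxx.
by apply: IH => q hq; apply: hs; rewrite inE hq orbT.
Qed.

Lemma tl_cont m : exists N, forall f, S f -> eqN N f one ->
  forall k, (0 < k < m)%N -> C k (tlog f k).
Proof.
case: Htl => _ _ /(_ m) [N HN] _; exists N => f hf ef k hk.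
apply: HN => // l /andP [l0 lN]; rewrite ef // /oneS; case: eqP => //; lia.
Qed.

Lemma NG_WClos g : NG g -> WClos j0 j1 lact ract g.
Proof. by move=> hg; split; [exact: NG_InS | move=> n; exists g]. Qed.

Lemma agree_inv N e h : S e -> eqN N e h -> eqN N (mulS (sinv e) h) one.
Proof.
move=> [e0 _] q; rewrite -(sinv_mulS e0); apply: eqN_mulS => //; exact: eqN_sym.
Qed.

Lemma decompE e h : S e -> mulS e (mulS (sinv e) h) = h.
Proof. by move=> [e0 _]; rewrite -mulSA mulS_sinv // mul1S. Qed.

Lemma C_cancel n x y : C n x -> C n (x - y) -> C n y.
Proof. by move=> hx hxy; have := CB hx hxy; apply: CE; rewrite opprB addrC subrK. Qed.

Lemma L_U n h : (0 < n)%N -> S h -> eqN n.+1 h one -> C n (tlog h n).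
Proof.
move=> hn; have [N0 HN] := tl_cont n.+1.
suff H : forall d j, (j + d = N0)%N -> (n < j)%N -> forall h, S h -> eqN j h one -> C n (tlog h n).
  move=> Sh eh; case: (leqP N0 n.+1) => hN.
    by apply: (HN h Sh (eqN_le hN eh)); rewrite hn ltnSn.
  by apply: (H (N0 - n.+1)%N n.+1) => //; lia.
elim => [|d IH] j hj hnj {}h Sh eh.
  by rewrite addn0 in hj; subst j; apply: (HN h Sh eh); rewrite hn ltnSn.
have hj0 : (0 < j)%N by lia.
have Som : S (one_minus j (- h j)) by apply: InS_om => //; apply: DN; case: Sh.
have e1 := om_step hj0 eh.
have Sh' := InS_mul (InS_sinv Som) Sh.
have eh' := agree_inv Som e1.
have IH' := IH j.+1 ltac:(lia) ltac:(lia) _ Sh' eh'.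
rewrite -(decompE h Som); apply: tl_mul0 => //.
case: Htl => _ _ _ /(_ j (- h j) n hj0 _ hn).
have -> : (j %| n)%N = false.
  by apply/negbTE/negP => /(dvdn_leq hn); rewrite leqNgt hnj.
by apply; apply: DN; case: Sh.
Qed.

Lemma K_step n h : (forall n, (0 < n)%N -> norm_injective j0 j1 n) ->
  (0 < n)%N -> S h -> eqN n h one -> C n (tlog h n) -> exists e, NG e /\ eqN n.+1 e h.
Proof.
move=> Hni hn Sh eh ch.
have Da : D n (- h n) by apply: DN; case: Sh.
have Som : S (one_minus n (- h n)) by apply: InS_om.
have e1 := om_step hn eh.
have Sh' := InS_mul (InS_sinv Som) Sh.
have eh' := agree_inv Som e1.
have c' := L_U hn Sh' eh'.
have com : C n (tlog (one_minus n (- h n)) n).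
  have := tl_mulE Som Sh' hn c'; rewrite decompE // => hx.
  exact: C_cancel ch hx.
case: Htl => _ _ _ /(_ n (- h n) n hn Da hn); rewrite dvdnn divnn hn.
move=> [ys [hys hy]]; rewrite mul1n in hys hy.
have hys' : forall i, (i < n)%N -> RotIter j0 j1 n i (- h n) (ys i).
  by move=> i hi; have := hys i hi; rewrite expr1.
have hsum := C_cancel com hy.
have hcyc := Hni n hn _ ys Da hys' hsum.
have [e [Ne qe]] := E_cyc hn hcyc.
by exists e; split => //; apply: eqN_trans qe e1.
Qed.

Lemma MainT (Hni : forall n, (0 < n)%N -> norm_injective j0 j1 n) d :
  forall n h, (0 < n)%N -> S h -> eqN n h one ->
  (forall k, (0 < k)%N -> (k < n + d)%N -> C k (tlog h k)) ->
  exists g, NG g /\ eqN (n + d) h g.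
Proof.
elim: d => [|d IH] n h hn Sh eh ch.
  by exists one; split; [apply: ng_one | rewrite addn0].
have [e [Ne qe]] := K_step Hni hn Sh eh (ch n hn ltac:(lia)).
have Se := NG_InS Ne.
have Sh' := InS_mul (InS_sinv Se) Sh.
have eh' := agree_inv Se qe.
have ch' : forall k, (0 < k)%N -> (k < n.+1 + d)%N -> C k (tlog (mulS (sinv e) h) k).
  move=> k k0 kl; have := tl_mulE2 Se Sh' k0 (tl_NG Ne k0); rewrite decompE // => hx.
  by apply: C_cancel (ch k k0 ltac:(lia)) hx.
have [g [Ng qg]] := IH n.+1 _ isT Sh' eh' ch'.
exists (mulS e g); split; first exact: ng_mul.
rewrite -(decompE h Se) addnS -addSn; apply: eqN_mulS => //; exact: eqN_refl.
Qed.

Lemma WClos_tl c : WClos j0 j1 lact ract c -> forall n, (0 < n)%N -> C n (tlog c n).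
Proof.
move=> [Sc hc] n hn; have [N HN] := tl_cont n.+1.
have [g [Ng qg]] := hc N.
have Sg := NG_InS Ng.
have Sc' := InS_mul (InS_sinv Sg) Sc.
have ec := agree_inv Sg (eqN_sym qg).
rewrite -(decompE c Sg); apply: tl_mul0 => //; first exact: tl_NG.
by apply: (HN _ Sc' ec); rewrite hn ltnSn.
Qed.

Lemma part1 f c : S f -> WClos j0 j1 lact ract c ->
  forall n, (0 < n)%N -> C n (tlog (mulS f c) n - tlog f n).
Proof.
move=> Sf hc n hn; apply: tl_mulE => //; first by case: hc.
exact: WClos_tl.
Qed.

Lemma part2 f0 m : S f0 -> exists n, forall f c, S f -> WClos j0 j1 lact ract c ->
  (forall k, (k < n)%N -> f k = mulS f0 c k) ->
  forall k, (0 < k < m)%N -> C k (tlog f k - tlog f0 k).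
Proof.
move=> Sf0; have [N HN] := tl_cont m; exists N => f c Sf hc ef k /andP [k0 km].
have Sc : S c by case: hc.
have Se := InS_mul Sf0 Sc.
have eh := agree_inv Se (eqN_sym ef).
have Sh := InS_mul (InS_sinv Se) Sf.
rewrite -(decompE f Se).
apply: cq_trans (tl_mulE Se Sh k0 _) (tl_mulE Sf0 Sc k0 _).
  by apply: (HN _ Sh eh); rewrite k0 km.
exact: WClos_tl.
Qed.

Lemma main_inj (Hni : forall n, (0 < n)%N -> norm_injective j0 j1 n) h :
  S h -> (forall k, (0 < k)%N -> C k (tlog h k)) -> WClos j0 j1 lact ract h.
Proof.
move=> Sh ch; split => // N.
have eh : eqN 1 h one by move=> k; rewrite ltnS leqn0 => /eqP ->; case: Sh.
have [g [Ng qg]] := @MainT Hni N 1%N h isT Sh eh (fun k k0 _ => ch k k0).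
by exists g; split => // k hk; apply: qg; rewrite add1n ltnS ltnW.
Qed.

Lemma part3 (Hni : forall n, (0 < n)%N -> norm_injective j0 j1 n) f g : S f -> S g ->
  (forall n, (0 < n)%N -> C n (tlog f n - tlog g n)) ->
  exists c, WClos j0 j1 lact ract c /\ forall n, f n = mulS g c n.
Proof.
move=> Sf Sg hfg; exists (mulS (sinv g) f); split; last by move=> n; rewrite decompE.
have Sc := InS_mul (InS_sinv Sg) Sf.
apply: main_inj => // k k0.
have h := tl_hom Sg Sc k0; rewrite decompE // in h.
apply: C_cancel (hfg k k0) _; apply: CE h; by rewrite opprD addrA.
Qed.

Lemma part4 (Hni : forall n, (0 < n)%N -> norm_injective j0 j1 n) f0 n : S f0 ->
  exists m, forall f, S f ->
   (forall k, (0 < k < m)%N -> C k (tlog f k - tlog f0 k)) ->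
   exists c, WClos j0 j1 lact ract c /\ forall k, (k < n)%N -> f k = mulS f0 c k.
Proof.
move=> Sf0; exists n.+1 => f Sf hf.
have Sc := InS_mul (InS_sinv Sf0) Sf.
have ch : forall k, (0 < k)%N -> (k < 1 + n)%N -> C k (tlog (mulS (sinv f0) f) k).
  move=> k k0 kn; have h := tl_hom Sf0 Sc k0; rewrite decompE // in h.
  apply: C_cancel (hf k _) _; first by rewrite k0 -add1n.
  apply: CE h; by rewrite opprD addrA.
have ec : eqN 1 (mulS (sinv f0) f) one by move=> k; rewrite ltnS leqn0 => /eqP ->; case: Sc.
have [g [Ng qg]] := @MainT Hni n 1%N _ isT Sc ec ch.
exists g; split; first exact: NG_WClos.
have q : eqN n (mulS f0 (mulS (sinv f0) f)) (mulS f0 g).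
  by apply: eqN_mulS; [exact: eqN_refl | move=> l hl; apply: qg; lia].
by move=> k hk; rewrite -{1}(decompE f Sf0); apply: q.
Qed.

End Main.


Unset Implicit Arguments.
Set Strict Implicit.
Theorem mainTheorem4 (R : pzRingType) (M : zmodType)
    (lact : R -> M -> M) (ract : M -> R -> M)
    (T : pzRingType) (j0 : R -> T) (j1 : M -> T)
    (tlog : (nat -> T) -> nat -> T) :
  bimodule_axioms lact ract ->
  tensor_algebra lact ract j0 j1 ->
  is_tlog j0 j1 tlog ->
  (forall f c, InS j0 j1 f -> WClos j0 j1 lact ract c ->
     forall n, (0 < n)%N ->
       Comm j0 j1 n (tlog (mulS f c) n - tlog f n)) /\
  (forall f0 m, InS j0 j1 f0 -> exists n, forall f c,
     InS j0 j1 f -> WClos j0 j1 lact ract c ->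
     (forall k, (k < n)%N -> f k = mulS f0 c k) ->
     forall k, (0 < k < m)%N -> Comm j0 j1 k (tlog f k - tlog f0 k)) /\
  ((forall n, (0 < n)%N -> norm_injective j0 j1 n) ->
   (forall f g, InS j0 j1 f -> InS j0 j1 g ->
      (forall n, (0 < n)%N -> Comm j0 j1 n (tlog f n - tlog g n)) ->
      exists c, WClos j0 j1 lact ract c /\ forall n, f n = mulS g c n) /\
   (forall f0 n, InS j0 j1 f0 -> exists m, forall f, InS j0 j1 f ->
      (forall k, (0 < k < m)%N -> Comm j0 j1 k (tlog f k - tlog f0 k)) ->
      exists c, WClos j0 j1 lact ract c /\
        forall k, (k < n)%N -> f k = mulS f0 c k)).
Proof.
move=> _ [[j01 j0am] j1a j1l j1r _] Htl.
have j0a : forall r s, j0 (r + s) = j0 r + j0 s by move=> r s; case: (j0am r s).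
have j0m : forall r s, j0 (r * s) = j0 r * j0 s by move=> r s; case: (j0am r s).
split; [|split].
- by move=> f c hf hc n hn; apply: (part1 j01 j0m j1l j1r Htl).
- by move=> f0 m hf0; apply: (part2 j01 j0m j1l j1r Htl).
- move=> Hni; split.
  + by move=> f g hf hg hfg; apply: (part3 j01 j0m j1l j1r Htl Hni).
  + by move=> f0 n hf0; apply: (part4 j01 j0m j1l j1r Htl Hni).
Qed.
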